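(* Let $G=(V,E,w)$ be an undirected graph without self-loops, with $n\ge 2$ vertices, positive edge weights and conductance $\Phi_G>0$. Then every HC tree $\mathcal{T}$ of $G$ satisfies \[ \mathrm{cost}_G(\mathcal{T}) \le \frac{9}{4\Phi_G}\cdot \min\left\{\frac{d_{\mathrm{avg}}}{d_{\min}},\frac{d_{\max}}{d_{\mathrm{avg}}}\right\}\cdot \mathsf{OPT}_G. \]
   Context: $d_u=\sum_{v} w_{uv}$; $d_{\min},d_{\max}$ are the minimum and maximum degree, $d_{\mathrm{avg}}=\sum_u d_u/n$. $\mathrm{vol}(S)=\sum_{u\in S}d_u$. Conductance of nonempty $S$: $\Phi_G(S)=w(S,V\setminus S)/\mathrm{vol}(S)$ where $w(S,T)$ is the total weight of edges between $S$ and $T$; $\Phi_G=\min\{\Phi_G(S):\emptyset\ne S\subset V,\ \mathrm{vol}(S)\le\mathrm{vol}(V)/2\}$. An HC tree is a rooted binary tree whose leaves are in bijection with $V$; $u\vee v$ is the lowest common ancestor; $\mathrm{cost}_G(\mathcal{T})=\sum_{\{u,v\}\in E}w_{uv}|\mathsf{leaves}(\mathcal{T}[u\vee v])|$; $\mathsf{OPT}_G=\min_{\mathcal{T}}\mathrm{cost}_G(\mathcal{T})$. *)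

(* Defs.v *)
From HB Require Import structures.
From mathcomp Require Import all_boot all_order all_algebra.
From mathcomp Require Import boolp classical_sets reals.
Set Implicit Arguments. Unset Strict Implicit. Unset Printing Implicit Defensive.
Import Order.TTheory GRing.Theory Num.Theory.
Local Open Scope classical_set_scope.
Local Open Scope ring_scope.

Section Graph.
Variables (R : realType) (V : finType) (w : V -> V -> R).

Definition deg (u : V) : R := \sum_(v : V) w u v.
Definition dmin : R := inf [set deg u | u in [set: V]].
Definition dmax : R := sup [set deg u | u in [set: V]].
Definition davg : R := (\sum_(u : V) deg u) / #|V|%:R.
Definition vol (S : {set V}) : R := \sum_(u in S) deg u.
Definition cut (S T : {set V}) : R := \sum_(u in S) \sum_(v in T) w u v.
Definition cond_set (S : {set V}) : R := cut S (~: S) / vol S.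
Definition conductance : R :=
  inf [set cond_set S | S in
        [set S : {set V} | (S != @finset.set0 V) /\ (S \proper [set: V])%SET /\
                           vol S <= vol [set: V]%SET / 2]].
End Graph.

Inductive hctree (V : Type) :=
| HLeaf of V
| HNode of hctree V & hctree V.
Arguments HLeaf {V}.
Arguments HNode {V}.

Fixpoint leaves (V : Type) (T : hctree V) : seq V :=
  match T with
  | HLeaf v => [:: v]
  | HNode l r => leaves l ++ leaves r
  end.

Definition is_hc_tree (V : finType) (T : hctree V) : bool :=
  perm_eq (leaves T) (enum V).

(* |leaves(T[u \/ v])|: number of leaves of the subtree rooted at the lowest
   common ancestor of leaves u and v. *)
Fixpoint lca_size (V : eqType) (T : hctree V) (u v : V) : nat :=
  match T with
  | HLeaf _ => 1
  | HNode l r =>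
      if (u \in leaves l) && (v \in leaves l) then lca_size l u v
      else if (u \in leaves r) && (v \in leaves r) then lca_size r u v
      else size (leaves T)
  end.

(* cost_G(T) = sum over edges {u,v} (each unordered pair counted once,
   non-edges have weight 0) of w_uv |leaves(T[u \/ v])| *)
Definition hc_cost (R : realType) (V : finType) (w : V -> V -> R)
  (T : hctree V) : R :=
  \sum_(u : V) \sum_(v : V | (enum_rank u < enum_rank v)%N)
     w u v * (lca_size T u v)%:R.

Definition hc_opt (R : realType) (V : finType) (w : V -> V -> R) : R :=
  inf [set hc_cost w T | T in [set T : hctree V | is_hc_tree T]].

(* Main.v *)
Require Import Defs.
From HB Require Import structures.
From mathcomp Require Import all_boot all_order all_algebra.
From mathcomp Require Import boolp classical_sets reals.
From mathcomp Require Import ring lra.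
Import Order.TTheory GRing.Theory Num.Theory.
Local Open Scope ring_scope.

Lemma exists_min (R : realType) (V : finType) (f : V -> R) (u0 : V) :
  exists m, forall u, f m <= f u.
Proof.
case: (@arg_minP _ R V u0 xpredT f erefl) => m _ hm.
by exists m => u; apply: hm.
Qed.

Lemma lca_sym (V : eqType) (t : hctree V) u v : lca_size t u v = lca_size t v u.
Proof.
elim: t => [x|l IHl r IHr] //=.
by rewrite IHl IHr (andbC (v \in _)) (andbC (v \in leaves r)).
Qed.

Lemma lca_le (V : eqType) (t : hctree V) u v : (lca_size t u v <= size (leaves t))%N.
Proof.
elim: t => [x|l IHl r IHr] //=.
rewrite size_cat.
case: ifP => _; first by apply: leq_trans IHl (leq_addr _ _).
case: ifP => _ //; by apply: leq_trans IHr (leq_addl _ _).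
Qed.

Lemma descend (R : realType) (V : eqType) (p : V -> R) (a : R) (t : hctree V) :
  uniq (leaves t) -> 2 * a < \sum_(x <- leaves t) p x -> (forall x, p x <= 2 * a) ->
  exists S Q : seq V, [/\ uniq S, {subset S <= leaves t},
    a <= \sum_(x <- S) p x <= 2 * a, 2 * a < \sum_(x <- Q) p x &
    forall u v, u \in S -> v \notin S -> (size Q <= lca_size t u v)%N].
Proof.
move=> + + hp; elim: t => [x|l IHl r IHr] /=.
  by rewrite big_seq1 => _ h; have := hp x; rewrite leNgt h.
rewrite cat_uniq => /and3P [ul dis ur]; rewrite big_cat /= => hs.
have dl : forall u, u \in leaves r -> u \notin leaves l.
  by move=> u ur'; apply/negP => ul'; move/hasPn: dis => /(_ u ur'); rewrite ul'.
case: (lerP (\sum_(x <- leaves r) p x) (\sum_(x <- leaves l) p x)) => hlr.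
  have hal : a < \sum_(x <- leaves l) p x by lra.
  case: (lerP (\sum_(x <- leaves l) p x) (2 * a)) => h2.
    exists (leaves l), (leaves l ++ leaves r); split => //.
    - by move=> x xl; rewrite mem_cat xl.
    - by apply/andP; split; lra.
    - by rewrite big_cat.
    move=> u v hu hv /=; rewrite (negbTE hv) andbF.
    case: ifP => //; case/andP => ur' _; by move: (dl u ur'); rewrite hu.
  have [S [Q [uS sS h12 h3 h4]]] := IHl ul h2.
  exists S, Q; split => //.
    by move=> x /sS; rewrite mem_cat => ->.
  move=> u v hu hv /=; have hul := sS u hu.
  case: ifP => [_|_]; first exact: h4.
  have -> : (u \in leaves r) = false by apply/negbTE/negP => ur'; move: (dl u ur'); rewrite hul.
  rewrite /= size_cat.
  exact: (leq_trans (h4 u v hu hv) (leq_trans (lca_le _ l u v) (leq_addr _ _))).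
have har : a < \sum_(x <- leaves r) p x by lra.
case: (lerP (\sum_(x <- leaves r) p x) (2 * a)) => h2.
  exists (leaves r), (leaves l ++ leaves r); split => //.
  - by move=> x xl; rewrite mem_cat xl orbT.
  - by apply/andP; split; lra.
  - by rewrite big_cat.
  move=> u v hu hv /=; rewrite (negbTE (dl u hu)) /= (negbTE hv) andbF //.
have [S [Q [uS sS h12 h3 h4]]] := IHr ur h2.
exists S, Q; split => //.
  by move=> x /sS; rewrite mem_cat => ->; rewrite orbT.
move=> u v hu hv /=; have hur := sS u hu.
rewrite (negbTE (dl u hur)) /= hur /=.
case: ifP => [_|_]; first exact: h4.
rewrite size_cat.
exact: (leq_trans (h4 u v hu hv) (leq_trans (lca_le _ r u v) (leq_addl _ _))).
Qed.

Lemma aux1 (R : realType) (a b c : R) : a + b = c -> a <= 2 * (c / 3) -> c / 3 <= b.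
Proof. lra. Qed.

Lemma eqA (R : realType) (F P n d : R) : F != 0 -> n != 0 -> d != 0 ->
  n * P / 2 = 9 / (4 * F) * (P / n / d) * (2 / 9 * F * d * (n * n)).
Proof. move=> *; field; apply/and3P; split => //. Qed.

Lemma eqB (R : realType) (F P n D : R) : F != 0 -> n != 0 -> P != 0 -> D != 0 ->
  n * P / 2 = 9 / (4 * F) * (D / (P / n)) * (2 / 9 * F * (P * P) / D).
Proof. move=> *; field; apply/and4P; split => //. Qed.

Section G.
Variables (R : realType) (V : finType) (w : V -> V -> R).
Hypotheses (hsym : forall u v, w u v = w v u) (hloop : forall u, w u u = 0)
  (hnonneg : forall u v, 0 <= w u v).

Lemma sum_sym (f : V -> V -> R) : (forall u v, f u v = f v u) -> (forall u, f u u = 0) ->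
  \sum_u \sum_v f u v = 2 * \sum_u \sum_(v | (enum_rank u < enum_rank v)%N) f u v.
Proof.
move=> fs f0.
have e : forall u, \sum_v f u v =
   \sum_v (if (enum_rank u < enum_rank v)%N then f u v else 0) +
   \sum_v (if (enum_rank v < enum_rank u)%N then f u v else 0).
  move=> u; rewrite -big_split /=; apply: eq_bigr => v _.
  case: (ltngtP (enum_rank u) (enum_rank v)) => h; rewrite ?addr0 ?add0r //.
  have /enum_rank_inj -> : enum_rank u = enum_rank v by apply: val_inj.
  by rewrite f0.
rewrite (eq_bigr _ (fun u _ => e u)) big_split /=.
rewrite [X in _ + X]exchange_big /=.
have A : \sum_u \sum_v (if (enum_rank u < enum_rank v)%N then f u v else 0)
   = \sum_u \sum_(v | (enum_rank u < enum_rank v)%N) f u v.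
  by apply: eq_bigr => u _; rewrite [RHS]big_mkcond.
have B : \sum_j \sum_i (if (enum_rank j < enum_rank i)%N then f i j else 0)
   = \sum_u \sum_(v | (enum_rank u < enum_rank v)%N) f u v.
  apply: eq_bigr => u _; rewrite [RHS]big_mkcond; apply: eq_bigr => v _; by rewrite fs.
rewrite A B; ring.
Qed.

Lemma cut_sym S T : cut w S T = cut w T S.
Proof.
rewrite /cut exchange_big; apply: eq_bigr => u _; apply: eq_bigr => v _; exact: hsym.
Qed.

Lemma cut_mk (X Y : {set V}) k : cut w X Y * k =
  \sum_u \sum_v (if (u \in X) && (v \in Y) then w u v * k else 0).
Proof.
rewrite /cut big_distrl big_mkcond /=; apply: eq_bigr => u _.
case: (u \in X) => /=; last by rewrite big1.
rewrite big_distrl big_mkcond /=; apply: eq_bigr => v _. by case: (v \in Y).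
Qed.

Lemma cost2 t : \sum_u \sum_v w u v * (lca_size t u v)%:R = 2 * hc_cost w t.
Proof.
rewrite /hc_cost; apply: sum_sym => [u v|u]; [by rewrite hsym lca_sym | by rewrite hloop mul0r].
Qed.

Lemma cost_lb t (X : {set V}) (k : nat) :
  (forall u v, u \in X -> v \notin X -> (k <= lca_size t u v)%N) ->
  k%:R * cut w X (~: X) <= hc_cost w t.
Proof.
move=> hk.
suff : 2 * (k%:R * cut w X (~: X)) <= 2 * hc_cost w t by lra.
rewrite -cost2.
have -> : 2 * (k%:R * cut w X (~:X)) = cut w X (~:X) * k%:R + cut w (~:X) X * k%:R.
  rewrite (cut_sym (~:X) X); ring.
rewrite !cut_mk -big_split /=; apply: ler_sum => u _; rewrite -big_split /=.
apply: ler_sum => v _; rewrite !inE.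
case hu: (u \in X); case hv: (v \in X) => /=; rewrite ?add0r ?addr0.
- by apply: mulr_ge0.
- by apply: ler_wpM2l => //; rewrite ler_nat; apply: hk; rewrite ?hv.
- by apply: ler_wpM2l => //; rewrite ler_nat lca_sym; apply: hk; rewrite ?hu.
- by apply: mulr_ge0.
Qed.

Lemma deg_ge0 u : 0 <= deg w u.
Proof. by apply: sumr_ge0. Qed.

Lemma vol_ge0 X : 0 <= vol w X.
Proof. by apply: sumr_ge0 => u _; apply: deg_ge0. Qed.

Lemma cut_ge0 X Y : 0 <= cut w X Y.
Proof. by apply: sumr_ge0 => u _; apply: sumr_ge0. Qed.

Lemma volT : vol w [set: V]%SET = \sum_x deg w x.
Proof. by rewrite /vol; apply: eq_bigl => x; rewrite inE. Qed.

Lemma vol_split X : vol w X + vol w (~: X) = \sum_x deg w x.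
Proof.
rewrite [RHS](bigID (fun x => x \in X)) /=; congr (_ + _); apply: eq_bigl => x;
  by rewrite ?inE.
Qed.

Lemma deg_half u : 2 * deg w u <= \sum_x deg w x.
Proof.
rewrite (bigD1 u) //=.
have : deg w u <= \sum_(x | x != u) deg w x.
  have -> : deg w u = \sum_(x | x != u) w x u.
    rewrite /deg (bigD1 u) //= hloop add0r; apply: eq_bigr => x _; by rewrite hsym.
  apply: ler_sum => x _; rewrite /deg (bigD1 u) //= lerDl; apply: sumr_ge0 => y _; exact: hnonneg.
lra.
Qed.

Lemma vol_set1 u : vol w [set u] = deg w u.
Proof. by rewrite /vol big_set1. Qed.

Lemma nonempty_of_vol X : 0 < vol w X -> X != finset.set0.
Proof. by move=> h; apply/eqP => e; move: h; rewrite e /vol big_set0 ltxx. Qed.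

Hypothesis hcond : 0 < conductance w.

Definition valid (S : {set V}) := S != finset.set0 /\ (S \proper [set: V])%SET /\ vol w S <= vol w [set: V]%SET / 2.

Lemma cond_ge S : valid S -> conductance w <= cond_set w S.
Proof.
move=> hv; apply: ge_inf; last by exists S.
exists 0 => x [S' _ <-]; rewrite /cond_set; apply: divr_ge0; [exact: cut_ge0|exact: vol_ge0].
Qed.

Lemma vol_pos S : valid S -> 0 < vol w S.
Proof.
move=> hv; have hc := cond_ge _ hv.
rewrite lt_def vol_ge0 andbT; apply/eqP => v0; move: hc; rewrite /cond_set v0 invr0 mulr0.
by rewrite leNgt hcond.
Qed.

Lemma cond_lb S : valid S -> conductance w * vol w S <= cut w S (~:S).
Proof.
move=> hv; have hc := cond_ge _ hv; have vp := vol_pos _ hv.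
by rewrite -ler_pdivlMr.
Qed.

Lemma cut_lb X c : 0 < c -> c <= vol w X -> c <= vol w (~: X) ->
  conductance w * c <= cut w X (~: X).
Proof.
move=> c0 h1 h2.
have n1 : X != finset.set0 by apply: nonempty_of_vol; lra.
have n2 : ~: X != finset.set0 by apply: nonempty_of_vol; lra.
have sp := vol_split X; rewrite -volT in sp.
case: (lerP (vol w X) (vol w [set: V]%SET / 2)) => h.
  have hv : valid X.
    split => //; split => //; rewrite properT; apply/eqP => eX; move: n2; by rewrite eX finset.setCT eqxx.
  apply: le_trans (cond_lb _ hv); apply: ler_wpM2l => //; exact: ltW.
have hv : valid (~: X).
  split => //; split; last lra.
  rewrite properT; apply/eqP => e; move: n1; by rewrite -[X]finset.setCK e finset.setCT eqxx.
have := cond_lb _ hv; rewrite finset.setCK cut_sym => h'.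
apply: le_trans h'; apply: ler_wpM2l => //; exact: ltW.
Qed.

Hypothesis hn : (2 <= #|V|)%N.

Lemma exists_v : exists u0 : V, true.
Proof.
have /card_gt0P [u0 _] : (0 < #|V|)%N by exact: (leq_trans (isT : (1 <= 2)%N) hn).
by exists u0.
Qed.

Lemma deg_pos u : 0 < deg w u.
Proof.
have hv : valid [set u].
  split; first by apply/set0Pn; exists u; rewrite inE.
  split; last by rewrite vol_set1 volT; have := deg_half u; have := deg_ge0 u; lra.
  rewrite properT; apply/eqP => e; have := cards1 u; rewrite e cardsT => h; move: hn; by rewrite h.
by have := vol_pos _ hv; rewrite vol_set1.
Qed.

Lemma P_pos : 0 < \sum_x deg w x.
Proof.
have [u0 _] := exists_v.
rewrite (bigD1 u0) //=; apply: ltr_wpDr; last exact: deg_pos.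
by apply: sumr_ge0 => x _; apply: deg_ge0.
Qed.

Lemma dmin_le u : dmin w <= deg w u.
Proof.
apply: ge_inf; last by exists u.
by exists 0 => y [x _ <-]; apply: deg_ge0.
Qed.

Lemma dmin_pos : 0 < dmin w.
Proof.
have [u0 _] := exists_v.
have [m hm] := exists_min _ _ (deg w) u0.
apply: lt_le_trans (deg_pos m) _; apply: lb_le_inf.
  by exists (deg w u0); exists u0.
by move=> y [x _ <-]; apply: hm.
Qed.

Lemma dmax_ge u : deg w u <= dmax w.
Proof.
apply: ub_le_sup; last by exists u.
exists (\sum_x deg w x) => y [x _ <-].
by have := deg_half x; have := deg_ge0 x; lra.
Qed.

Lemma dmax_pos : 0 < dmax w.
Proof. have [u0 _] := exists_v; exact: lt_le_trans (deg_pos u0) (dmax_ge u0). Qed.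

Lemma size_leaves (t : hctree V) : is_hc_tree t -> size (leaves t) = #|V|.
Proof. by move=> h; rewrite (perm_size h) -cardE. Qed.

Lemma uniq_leaves (t : hctree V) : is_hc_tree t -> uniq (leaves t).
Proof. by move=> h; rewrite (perm_uniq h) enum_uniq. Qed.

Lemma sum_leaves (t : hctree V) (p : V -> R) : is_hc_tree t -> \sum_(x <- leaves t) p x = \sum_x p x.
Proof. by move=> h; rewrite (perm_big _ h) big_enum. Qed.

Lemma sum1_seq (s : seq V) : \sum_(x <- s) (1 : R) = (size s)%:R.
Proof. by elim: s => [|x s IH]; rewrite ?big_nil // big_cons IH /= mulrS. Qed.

Lemma sum_le_size (s : seq V) (p : V -> R) M : (forall x, p x <= M) ->
  \sum_(x <- s) p x <= (size s)%:R * M.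
Proof.
move=> hp; elim: s => [|x s IH]; first by rewrite big_nil mul0r.
by rewrite big_cons /= mulrS mulrDl mul1r; apply: lerD.
Qed.

Lemma card_seq (S : seq V) : uniq S -> #|[set x in S]| = size S.
Proof. by move=> u; rewrite cardsE; apply/card_uniqP. Qed.

Lemma vol_seq (S : seq V) : uniq S -> vol w [set x in S] = \sum_(x <- S) deg w x.
Proof. by move=> u; rewrite big_uniq // /vol; apply: eq_bigl => x; rewrite inE. Qed.

Lemma vol_card (X : {set V}) : dmin w * #|X|%:R <= vol w X.
Proof.
rewrite /vol; have -> : dmin w * #|X|%:R = \sum_(u in X) dmin w by rewrite sumr_const mulr_natr.
by apply: ler_sum => u _; apply: dmin_le.
Qed.

Lemma lb1 (t : hctree V) : is_hc_tree t ->
  2/9 * conductance w * dmin w * (#|V|%:R * #|V|%:R) <= hc_cost w t.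
Proof.
move=> ht; set n : R := #|V|%:R.
have n2 : 2 <= n by rewrite /n (ler_nat R 2).
have hd := dmin_pos.
have hh1 : 2 * (n / 3) < \sum_(x <- leaves t) (1 : R) by rewrite sum1_seq size_leaves //; lra.
have hh2 : forall x : V, (1 : R) <= 2 * (n / 3) by move=> _; lra.
have [S [Q [uS sS h12 h3 h4]]] := descend _ _ _ _ _ (uniq_leaves _ ht) hh1 hh2.
clear hh1 hh2.
move: h12; rewrite sum1_seq => /andP [hS1 hS2]; rewrite sum1_seq in h3.
set X := [set x in S].
have cX := card_seq _ uS.
have cCR : (#|X|%:R + #|~:X|%:R = n :> R) by rewrite -natrD cardsC.
have v1 : dmin w * (n/3) <= vol w X.
  apply: le_trans (vol_card X); apply: ler_wpM2l; [exact: ltW | by rewrite cX].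
have v2 : dmin w * (n/3) <= vol w (~:X).
  apply: le_trans (vol_card _); apply: ler_wpM2l; first exact: ltW.
  rewrite cX in cCR; exact: aux1 cCR hS2.
have c0 : 0 < dmin w * (n/3) by apply: mulr_gt0 => //; lra.
have hc := cut_lb _ _ c0 v1 v2.
have hk : (size Q)%:R * cut w X (~:X) <= hc_cost w t.
  by apply: cost_lb => u v; rewrite !inE; apply: h4.
have e1 : (size Q)%:R * (conductance w * (dmin w * (n/3))) <= (size Q)%:R * cut w X (~:X).
  by apply: ler_wpM2l => //; apply: ler0n.
have e2 : (2 * (n/3)) * (conductance w * (dmin w * (n/3))) <= (size Q)%:R * (conductance w * (dmin w * (n/3))).
  apply: ler_wpM2r; last exact: ltW.
  by apply: mulr_ge0; [exact: ltW | exact: ltW].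
have -> : 2/9 * conductance w * dmin w * (n * n) = (2 * (n/3)) * (conductance w * (dmin w * (n/3))) by field.
exact: le_trans e2 (le_trans e1 hk).
Qed.

Lemma lb2 (t : hctree V) : is_hc_tree t ->
  2/9 * conductance w * ((\sum_x deg w x) * (\sum_x deg w x)) / dmax w <= hc_cost w t.
Proof.
move=> ht; set P := \sum_x deg w x.
have hP : 0 < P := P_pos.
have hd := dmax_pos.
have hsum : \sum_(x <- leaves t) deg w x = P by apply: sum_leaves.
have h2 : 2 * (P / 3) < \sum_(x <- leaves t) deg w x by rewrite hsum; lra.
have hp : forall x, deg w x <= 2 * (P / 3).
  by move=> x; have := deg_half x; have := deg_ge0 x; rewrite -/P; lra.
have [S [Q [uS sS h12 h3 h4]]] := descend _ _ _ _ _ (uniq_leaves _ ht) h2 hp.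
clear hp h2.
move: h12 => /andP [hS1 hS2].
set X := [set x in S].
have vX : vol w X = \sum_(x <- S) deg w x by apply: vol_seq.
have vs := vol_split X; rewrite -/P in vs.
have v1 : P / 3 <= vol w X by rewrite vX.
have v2 : P / 3 <= vol w (~:X) by rewrite vX in vs; lra.
have c0 : 0 < P / 3 by lra.
have hc := cut_lb _ _ c0 v1 v2.
have hk : (size Q)%:R * cut w X (~:X) <= hc_cost w t.
  by apply: cost_lb => u v; rewrite !inE; apply: h4.
have hQ : \sum_(x <- Q) deg w x <= (size Q)%:R * dmax w by apply: sum_le_size; apply: dmax_ge.
have e1 : (size Q)%:R * (conductance w * (P/3)) <= hc_cost w t.
  apply: le_trans hk; by apply: ler_wpM2l => //; apply: ler0n.
have e2 : (size Q)%:R * (conductance w * (P/3)) * dmax w <= hc_cost w t * dmax w.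
  by apply: ler_wpM2r => //; exact: ltW.
have e3 : (2 * (P/3)) * (conductance w * (P/3)) <= ((size Q)%:R * dmax w) * (conductance w * (P/3)).
  apply: ler_wpM2r; last lra.
  by apply: mulr_ge0; [exact: ltW | lra].
rewrite ler_pdivrMr //.
have -> : 2/9 * conductance w * (P * P) = (2 * (P/3)) * (conductance w * (P/3)) by field.
apply: le_trans e3 _.
have -> : (size Q)%:R * dmax w * (conductance w * (P/3)) = (size Q)%:R * (conductance w * (P/3)) * dmax w by ring.
exact: e2.
Qed.

Lemma cost_ub (t : hctree V) : is_hc_tree t -> hc_cost w t <= #|V|%:R * (\sum_x deg w x) / 2.
Proof.
move=> ht.
suff : 2 * hc_cost w t <= #|V|%:R * (\sum_x deg w x) by lra.
rewrite -cost2.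
have -> : #|V|%:R * (\sum_x deg w x) = \sum_u \sum_v w u v * #|V|%:R.
  rewrite mulrC big_distrl; apply: eq_bigr => u _; by rewrite /deg big_distrl.
apply: ler_sum => u _; apply: ler_sum => v _; apply: ler_wpM2l => //.
by rewrite ler_nat -(size_leaves _ ht) lca_le.
Qed.

End G.

Theorem lemma3p1 (R : realType) (V : finType) (w : V -> V -> R)
  (hn : (2 <= #|V|)%N)
  (hsym : forall u v, w u v = w v u)
  (hloop : forall u, w u u = 0)
  (hnonneg : forall u v, 0 <= w u v)
  (hcond : 0 < conductance w)
  (T : hctree V) (hT : is_hc_tree T) :
  hc_cost w T <=
    9 / (4 * conductance w) *
    Num.min (davg w / dmin w) (dmax w / davg w) * hc_opt w.
Proof.
set P := \sum_x deg w x.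
set n : R := #|V|%:R.
have hP : 0 < P := P_pos _ _ _ hsym hloop hnonneg hcond hn.
have hd1 : 0 < dmin w := dmin_pos _ _ _ hsym hloop hnonneg hcond hn.
have hd2 : 0 < dmax w := dmax_pos _ _ _ hsym hloop hnonneg hcond hn.
have n2 : 2 <= n by rewrite /n (ler_nat R 2).
have hub : hc_cost w T <= n * P / 2 := cost_ub _ _ _ hsym hloop hnonneg _ hT.
have o1 : 2/9 * conductance w * dmin w * (n * n) <= hc_opt w.
  apply: lb_le_inf; first by exists (hc_cost w T); exists T.
  move=> y [t ht <-]; exact: (lb1 _ _ _ hsym hloop hnonneg hcond hn _ ht).
have o2 : 2/9 * conductance w * (P * P) / dmax w <= hc_opt w.
  apply: lb_le_inf; first by exists (hc_cost w T); exists T.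
  move=> y [t ht <-]; exact: (lb2 _ _ _ hsym hloop hnonneg hcond hn _ ht).
have hdavg : davg w = P / n by [].
rewrite hdavg.
have hn0 : 0 < n by lra.
case: (lerP (P / n / dmin w) (dmax w / (P / n))) => hmin.
  idtac.
  apply: le_trans hub _.
  have c0 : 0 <= 9 / (4 * conductance w) * (P / n / dmin w).
    apply: mulr_ge0; apply: divr_ge0; try apply: divr_ge0; try lra.
  apply: le_trans (ler_wpM2l c0 o1).
  rewrite le_eqVlt; apply/orP; left; apply/eqP.
  by apply: eqA; apply: lt0r_neq0.
idtac.
apply: le_trans hub _.
have c0 : 0 <= 9 / (4 * conductance w) * (dmax w / (P / n)).
  apply: mulr_ge0; apply: divr_ge0; try apply: divr_ge0; try lra.
apply: le_trans (ler_wpM2l c0 o2).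
rewrite le_eqVlt; apply/orP; left; apply/eqP.
by apply: eqB; apply: lt0r_neq0.
Qed.
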